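(* Let $\mathcal{I}$ be an interval hypergraph on $[n]$ closed under intersection, and let $A,B$ be acyclic orientations of $\mathcal{I}$. The following are equivalent: (a) $A\le B$ in $P_{\mathcal{I}}$; (b) $A(I)\le B(I)$ for all $I\in\mathcal{I}$; (c) $\sigma_A\le\tau_B$ in the weak order; (d) for all $i<j$ in $[n]$, $j\prec_A i$ implies $i\not\prec_B j$.
   Context: An interval hypergraph $\mathcal{I}$ on $[n]$ is a collection of intervals of $[n]$ containing all singletons; it is closed under intersection if $I,J\in\mathcal{I}$, $I\cap J\ne\varnothing$ imply $I\cap J\in\mathcal{I}$. An orientation is a map $O:\mathcal{I}\to[n]$ with $O(I)\in I$; it is acyclic if there are no $H_1,\dots,H_k$, $k\ge2$, with $O(H_{i+1})\in H_i\setminus\{O(H_i)\}$ for $i\in[k-1]$ and $O(H_1)\in H_k\setminus\{O(H_k)\}$. Orientations $O\ne O'$ are related by an increasing flip (from $O$ to $O'$) if there exist $1\le i<j\le n$ such that for all $H$: if $O(H)\ne O'(H)$ then $O(H)=i$, $O'(H)=j$; and if $\{i,j\}\subseteq H$ then $O(H)=i\iff O'(H)=j$. $P_{\mathcal{I}}$ is the transitive closure of the increasing flip relation on acyclic orientations. For a permutation $\pi$, $\mathrm{Or}_\pi(I)=\pi(\min\{j:\pi(j)\in I\})$; for each acyclic orientation $A$ the fiber $\{\pi:\mathrm{Or}_\pi=A\}$ is an interval of the weak order, denoted $[\sigma_A,\tau_A]$. The partial order $\prec_A$ on $[n]$ is the transitive closure of $A(I)\prec_A h$ for $I\in\mathcal{I}$,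 $h\in I\setminus\{A(I)\}$. *)

(* Defs.v *)
(* Ground set [n] = {1..n} is modelled by 'I_n = {0..n-1}
   (order-preserving relabelling). *)
From mathcomp Require Import all_boot fingroup perm.
Set Implicit Arguments. Unset Strict Implicit. Unset Printing Implicit Defensive.

Section Defs.
Variable n : nat.
Implicit Types (I J : {set 'I_n}) (Hg : {set {set 'I_n}}) (O : {set 'I_n} -> 'I_n).

Definition is_interval I : bool :=
  (I != set0) &&
  [forall i : 'I_n, forall j : 'I_n, forall k : 'I_n,
     [&& i \in I, k \in I, (i <= j)%N & (j <= k)%N] ==> (j \in I)].

Definition interval_hypergraph Hg : Prop :=
  (forall I, I \in Hg -> is_interval I) /\ (forall i : 'I_n, [set i] \in Hg).

Definition closed_under_intersection Hg : Prop :=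
  forall I J, I \in Hg -> J \in Hg -> I :&: J != set0 -> I :&: J \in Hg.

(* Orientation: O(I) \in I for every hyperedge (values outside Hg irrelevant). *)
Definition orientation Hg O : Prop := forall I, I \in Hg -> O I \in I.

Definition orient_eq Hg O O' : Prop := forall I, I \in Hg -> O I = O' I.

Definition cyc_rel O : rel {set 'I_n} := fun X Y => O Y \in X :\ O X.

(* Acyclic: no H_1..H_k (k >= 2) in Hg with O(H_{i+1}) \in H_i \ {O(H_i)}
   cyclically (path.cycle gives exactly these k conditions). *)
Definition acyclic Hg O : Prop :=
  forall s : seq {set 'I_n}, all (fun X => X \in Hg) s -> (1 < size s)%N ->
    ~~ path.cycle (cyc_rel O) s.

Definition incr_flip Hg O O' : Prop :=
  ~ orient_eq Hg O O' /\
  exists i j : 'I_n, (i < j)%N /\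
    forall X, X \in Hg ->
      (O X <> O' X -> O X = i /\ O' X = j) /\
      ([set i; j] \subset X -> (O X = i <-> O' X = j)).

Inductive PI_le Hg : ({set 'I_n} -> 'I_n) -> ({set 'I_n} -> 'I_n) -> Prop :=
| PI_refl O O' : orient_eq Hg O O' -> PI_le Hg O O'
| PI_step O C O' : incr_flip Hg O C -> acyclic Hg C -> PI_le Hg C O' ->
    PI_le Hg O O'.

Definition Or (pi : {perm 'I_n}) I : option 'I_n :=
  ohead [seq pi j | j <- enum 'I_n & pi j \in I].

Definition in_fiber Hg (pi : {perm 'I_n}) O : Prop :=
  forall I, I \in Hg -> Or pi I = Some (O I).

(* Inversion set (on values) and the weak order. *)
Definition inv_set (pi : {perm 'I_n}) : {set 'I_n * 'I_n} :=
  [set p : 'I_n * 'I_n | (p.1 < p.2)%N && ((pi^-1)%g p.2 < (pi^-1)%g p.1)%N].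

Definition weak_le (pi pi' : {perm 'I_n}) : bool := inv_set pi \subset inv_set pi'.

Definition fiber_min Hg O (s : {perm 'I_n}) : Prop :=
  in_fiber Hg s O /\ forall pi, in_fiber Hg pi O -> weak_le s pi.
Definition fiber_max Hg O (t : {perm 'I_n}) : Prop :=
  in_fiber Hg t O /\ forall pi, in_fiber Hg pi O -> weak_le pi t.

Definition prec_step Hg O : rel 'I_n :=
  fun x y => [exists X in Hg, (O X == x) && (y \in X :\ x)].
Definition prec Hg O (x y : 'I_n) : bool :=
  [exists z, prec_step Hg O x z && connect (prec_step Hg O) z y].

End Defs.

(* Main.v *)
Require Import Defs.
From mathcomp Require Import all_boot fingroup perm.
From mathcomp Require Import zify.
From Stdlib Require Import Classical.
Set Implicit Arguments. Unset Strict Implicit. Unset Printing Implicit Defensive.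

Section S.
Variable n : nat.
Notation pos p := ((p^-1)%g : {perm 'I_n}).

Lemma sorted_enum : sorted (fun i j : 'I_n => i < j) (enum 'I_n).
Proof. by have := iota_ltn_sorted 0 n; rewrite -val_enum_ord sorted_map. Qed.

Lemma hd_filter_min (s : seq 'I_n) (P : pred 'I_n) (j0 : 'I_n) :
  sorted (fun i j : 'I_n => i < j) s -> j0 \in s -> P j0 ->
  (forall j, j \in s -> P j -> j0 <= j) -> ohead (filter P s) = Some j0.
Proof.
elim: s => [//|j s IH] Hs; rewrite inE => Hj0 Pj0 Hmin /=.
have tr : transitive (fun i j : 'I_n => i < j) by move=> ? ? ? ? ?; apply: ltn_trans; eauto.
have Hall := order_path_min tr Hs.
case: ifP => Pj /=.
  case/orP: Hj0 => [/eqP->//|Hj0s].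
  have := Hmin j (mem_head _ _) Pj; have := allP Hall _ Hj0s => /=; lia.
case/orP: Hj0 => [/eqP Ej|Hj0s]; first by rewrite -Ej Pj0 in Pj.
apply: IH => //; first exact: path_sorted Hs.
by move=> k ks Pk; apply: Hmin => //; rewrite inE ks orbT.
Qed.

Lemma Or_min (pi : {perm 'I_n}) (X : {set 'I_n}) z : z \in X ->
  (forall y, y \in X -> pos pi z <= pos pi y) -> Or pi X = Some z.
Proof.
move=> zX Hm; rewrite /Or.
have H := @hd_filter_min _ (fun j => pi j \in X) (pos pi z) sorted_enum.
rewrite mem_enum permKV in H; have {H} := H isT zX.
have H2 : forall j, j \in enum 'I_n -> pi j \in X -> pos pi z <= j.
  by move=> j _ Hj; have := Hm _ Hj; rewrite permK.
move/(_ H2).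
by case: [seq _ <- _ | _] => //= j _ [->]; rewrite permKV.
Qed.

Lemma ohead_mem (T : eqType) (s : seq T) z : ohead s = Some z -> z \in s.
Proof. by case: s => //= ? ? [->]; rewrite mem_head. Qed.

Lemma Or_mem (pi : {perm 'I_n}) (X : {set 'I_n}) z : Or pi X = Some z -> z \in X.
Proof.
by move/ohead_mem/mapP=> [j]; rewrite mem_filter => /andP[? _] ->.
Qed.
End S.

Lemma path_mono (T : Type) (e : rel T) (P : pred T) (g : T -> nat) :
  (forall x y, P x -> e x y -> g x < g y) ->
  forall p x, P x -> all P p -> path e x p -> g x + size p <= g (last x p).
Proof.
move=> He; elim=> [|y p IH] x Px /=; first by rewrite addn0.
move=> /andP[Py Pp] /andP[exy Hp]; have := He _ _ Px exy.
have := IH y Py Pp Hp; lia.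
Qed.

Lemma cycle_mono (T : Type) (e : rel T) (P : pred T) (g : T -> nat) s :
  (forall x y, P x -> e x y -> g x < g y) -> all P s -> s <> [::] -> ~~ path.cycle e s.
Proof.
move=> He; case: s => [//|x s] /= /andP[Px Ps] _; apply/negP => Hc.
have := path_mono He (p := rcons s x) Px; rewrite all_rcons Px Ps => /(_ isT Hc).
rewrite last_rcons size_rcons; lia.
Qed.

Section S2.
Variable n : nat.
Notation pos p := ((p^-1)%g : {perm 'I_n}).
Variable Hg : {set {set 'I_n}}.
Hypothesis Hne : forall X, X \in Hg -> X != set0.
Variable d : 'I_n.

Definition OrF (pi : {perm 'I_n}) X := odflt d (Or pi X).

Lemma OrF_min pi (X : {set 'I_n}) z : z \in X ->
  (forall y, y \in X -> pos pi z <= pos pi y) -> OrF pi X = z.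
Proof. by move=> zX Hm; rewrite /OrF (Or_min zX Hm). Qed.

Lemma exists_min (pi : {perm 'I_n}) X : X \in Hg ->
  exists2 z, z \in X & forall y, y \in X -> pos pi z <= pos pi y.
Proof.
move=> /Hne /set0Pn [x xX].
case: (@arg_minnP _ x (mem X) (fun y => pos pi y) xX) => z zX Hz.
by exists z.
Qed.

Lemma OrF_mem pi X : X \in Hg ->
  OrF pi X \in X /\ forall y, y \in X -> pos pi (OrF pi X) <= pos pi y.
Proof.
move=> XH; case: (exists_min pi XH) => z zX Hz.
by rewrite (OrF_min zX Hz).
Qed.

Lemma OrF_lt pi X y : X \in Hg -> y \in X -> y != OrF pi X ->
  pos pi (OrF pi X) < pos pi y.
Proof.
move=> XH yX ny; have [_ H] := OrF_mem pi XH; have := H _ yX.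
rewrite leq_eqVlt => /orP[/eqP E|//].
by move/val_inj/perm_inj: E => E; rewrite E eqxx in ny.
Qed.

Lemma acyclic_OrF pi : acyclic Hg (OrF pi).
Proof.
move=> s Hs Hsz; apply: (@cycle_mono _ _ (fun X => X \in Hg) (fun X => pos pi (OrF pi X))) => //.
  move=> X Y XH; rewrite /cyc_rel !inE => /andP[ne yX].
  exact: OrF_lt.
by case: s Hsz Hs.
Qed.
End S2.

Section S3.
Variable n : nat.
Notation pos p := ((p^-1)%g : {perm 'I_n}).
Variable Hg : {set {set 'I_n}}.
Hypothesis Hne : forall X, X \in Hg -> X != set0.
Variable d : 'I_n.
Local Notation OrF := (OrF d).

Lemma pos_neq (s : {perm 'I_n}) x y : x <> y -> (pos s x : nat) <> pos s y.
Proof. by move=> ne /val_inj/perm_inj E. Qed.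

Lemma posT (s : {perm 'I_n}) a b y : pos (s * tperm a b)%g y = pos s (tperm a b y).
Proof. by rewrite invMg permM tpermV. Qed.

Section Swap.
Variables (s : {perm 'I_n}) (a b : 'I_n).
Hypothesis ab : a < b.
Hypothesis adj : (pos s b : nat) = (pos s a).+1.
Local Notation s' := (s * tperm a b)%g.

Lemma ab_neq : a <> b.
Proof. by move=> E; move: ab; rewrite E ltnn. Qed.

Lemma swap_OrF X : X \in Hg ->
  OrF s' X = if (OrF s X == a) && (b \in X) then b else OrF s X.
Proof.
move=> XH; have [fX fmin] := OrF_mem Hne d s XH.
have nab := ab_neq; have pab := pos_neq (s:=s) nab.
case: eqP => [fa|fna] /=.
  rewrite fa in fX fmin *.
  case: ifP => bX.
    apply: (OrF_min d bX) => y yX; rewrite !posT tpermR.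
    have := fmin _ yX.
    case: tpermP => [->|->|ya yb]; lia.
  apply: (OrF_min d fX) => y yX; rewrite !posT tpermL.
  have := fmin _ yX.
  case: tpermP => [->|E|ya yb]; [lia| by move: bX; rewrite -E yX|].
  have := pos_neq (s:=s) ya; have := pos_neq (s:=s) yb; lia.
case: (OrF s X =P b) => [fb|fnb].
  rewrite fb in fX fmin *.
  apply: (OrF_min d fX) => y yX; rewrite !posT tpermR.
  have := fmin _ yX.
  case: tpermP => [E|->|ya yb]; [|lia|lia].
  by rewrite E in yX; have := fmin _ yX; lia.
apply: (OrF_min d fX) => y yX; rewrite !posT.
have := pos_neq (s:=s) fna; have := pos_neq (s:=s) fnb.
case: (tpermP a b (OrF s X)) => [//|//|_ _].
have := fmin _ yX.
case: tpermP => [->|->|ya yb]; try lia.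
Qed.

Lemma swap_flip X : X \in Hg ->
  (OrF s X <> OrF s' X -> OrF s X = a /\ OrF s' X = b) /\
  ([set a; b] \subset X -> (OrF s X = a <-> OrF s' X = b)).
Proof.
move=> XH; have [fX fmin] := OrF_mem Hne d s XH.
rewrite (swap_OrF XH); split.
  by case: ifP => [/andP[/eqP -> _]|_] //.
move=> /subsetP sub.
have bX : b \in X by apply: sub; rewrite !inE eqxx orbT.
have aX : a \in X by apply: sub; rewrite !inE eqxx.
rewrite bX andbT; case: eqP => [->|fna]; split=> // E.
by have := fmin _ aX; rewrite E; lia.
Qed.

Lemma inv_swap : inv_set s' = (a, b) |: inv_set s.
Proof.
have nab := ab_neq; have pab := pos_neq (s:=s) nab.
have nab' : (a : nat) <> b by move/val_inj.
apply/setP => -[x y]; rewrite !inE /= !posT xpair_eqE -!val_eqE /=.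
have pxy : (x : nat) <> y -> (pos s x : nat) <> pos s y.
  by move=> h; apply: pos_neq => E; apply: h; rewrite E.
case: (tpermP a b x) => [->|->|xa xb]; case: (tpermP a b y) => [->|->|ya yb].
all: try (have : (x : nat) <> a by move/val_inj);
     try (have : (x : nat) <> b by move/val_inj);
     try (have : (y : nat) <> a by move/val_inj);
     try (have : (y : nat) <> b by move/val_inj).
all: try (have := pos_neq (s:=s) xa); try (have := pos_neq (s:=s) xb);
     try (have := pos_neq (s:=s) ya); try (have := pos_neq (s:=s) yb).
all: lia.
Qed.

Lemma ab_notin : (a, b) \notin inv_set s.
Proof. by rewrite !inE /= adj; lia. Qed.
End Swap.

Lemma inv_mem (s : {perm 'I_n}) x y :
  ((x, y) \in inv_set s) = (x < y) && (pos s y < pos s x).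
Proof. by rewrite inE. Qed.

Lemma adj_exists (s t : {perm 'I_n}) : inv_set s \subset inv_set t ->
  ~~ (inv_set t \subset inv_set s) ->
  exists a b : 'I_n, a < b /\ (pos s b : nat) = (pos s a).+1 /\ (a, b) \in inv_set t.
Proof.
move=> sub /subsetPn [p0 p0t p0s].
pose S := inv_set t :\: inv_set s.
have p0S : p0 \in S by rewrite inE p0t p0s.
case: (@arg_minnP _ p0 (mem S) (fun p => pos s p.2 - pos s p.1) p0S) => [[x y]] /= pS Hmin.
have cand : forall u v : 'I_n, u < v -> pos t v < pos t u -> pos s u < pos s v ->
    pos s v - pos s u < pos s y - pos s x -> False.
  move=> u v uv tvu suv; have : (u, v) \in S.
    by rewrite !inE /= uv tvu /=; lia.
  by move/Hmin => /=; lia.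
have incl : forall u v : 'I_n, u < v -> pos s v < pos s u -> pos t v < pos t u.
  move=> u v uv svu; have : (u, v) \in inv_set s by rewrite inv_mem uv.
  by move/(subsetP sub); rewrite inv_mem => /andP[].
move: pS; rewrite !inE /= => /andP[nis /andP[xy tyx]].
have nxy : x <> y by move=> E; move: xy; rewrite E ltnn.
have sxy : pos s x < pos s y.
  by move: nis; rewrite xy /=; have := pos_neq (s:=s) nxy; lia.
case E: ((pos s y : nat) == (pos s x).+1); first by exists x, y; split => //; split; [apply/eqP | rewrite inv_mem xy tyx].
have hz : (pos s x).+1 < n by have := ltn_ord (pos s y); move/eqP: E; lia.
pose z := s (Ordinal hz).
have pz : (pos s z : nat) = (pos s x).+1 by rewrite /z permK.
have zx : (z : nat) <> x by move=> /val_inj Ez; move: pz; rewrite Ez; lia.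
have zy : (z : nat) <> y by move=> /val_inj Ez; move: pz; rewrite Ez; move/eqP: E; lia.
have tzx : (pos t z : nat) <> pos t x by apply: pos_neq => Ez; apply: zx; rewrite Ez.
exfalso; case: (ltngtP x z) => [xz|zx'|]; last by move=> Ez; apply: zx; rewrite Ez.
  case: (ltngtP (pos t z) (pos t x)) => [tz|tz|]; last by move/tzx.
    by apply: (cand x z) => //; rewrite ?pz; move/eqP: E; lia.
  case: (ltngtP z y) => [zy'|yz|]; last by move=> /zy.
    by apply: (cand z y) => //; rewrite ?pz; try lia; move/eqP: E; lia.
  by have := incl y z yz; rewrite pz; lia.
have := incl z x zx'; rewrite pz => /(_ (ltnSn _)) tx.
by apply: (cand z y) => //; rewrite ?pz; lia.
Qed.

Lemma same_OrF (s t : {perm 'I_n}) : inv_set t \subset inv_set s ->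
  inv_set s \subset inv_set t -> orient_eq Hg (OrF s) (OrF t).
Proof.
move=> ts st X XH; have [fX fmin] := OrF_mem Hne d s XH.
symmetry; apply: (OrF_min d fX) => y yX.
case: (eqVneq y (OrF s X)) => [->//|ny].
have lt := OrF_lt Hne XH yX ny.
have fy : (OrF s X : nat) <> y by move/val_inj => E; rewrite E eqxx in ny.
case: (ltngtP (OrF s X) y) => [h|h|//].
  have : (OrF s X, y) \notin inv_set t.
    apply/negP => /(subsetP ts); rewrite inv_mem h /=; lia.
  by rewrite inv_mem h /=; lia.
have : (y, OrF s X) \in inv_set t by apply: (subsetP st); rewrite inv_mem h.
by rewrite inv_mem => /andP[_ ?]; lia.
Qed.
End S3.

Section S4.
Variable n : nat.
Notation pos p := ((p^-1)%g : {perm 'I_n}).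
Variable Hg : {set {set 'I_n}}.
Hypothesis Hne : forall X, X \in Hg -> X != set0.
Variable d : 'I_n.
Local Notation OrF := (OrF d).

Lemma chain (t : {perm 'I_n}) B' : orient_eq Hg (OrF t) B' ->
  forall k (s : {perm 'I_n}) O, #|inv_set t :\: inv_set s| <= k ->
  inv_set s \subset inv_set t -> orient_eq Hg O (OrF s) -> PI_le Hg O B'.
Proof.
move=> eqB; elim=> [|k IH] s O hk st eqO.
  apply: PI_refl => X XH; rewrite eqO // -eqB //.
  apply: (same_OrF Hne) => //; apply/subsetP => p pt; apply/negPn/negP => ps.
  move: hk; rewrite leqn0 => /eqP/cards0_eq/setP/(_ p); by rewrite in_setD ps pt inE.
case: (boolP (inv_set t \subset inv_set s)) => [ts|nts].
  apply: PI_refl => X XH; rewrite eqO // -eqB //.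
  exact: (same_OrF Hne).
have [a [b [ab [adj abt]]]] := adj_exists st nts.
pose s' := (s * tperm a b)%g.
have is' : inv_set s' = (a, b) |: inv_set s by apply: inv_swap.
have s't : inv_set s' \subset inv_set t by rewrite is' subUset sub1set abt st.
have hk' : #|inv_set t :\: inv_set s'| <= k.
  have : inv_set t :\: inv_set s' \proper inv_set t :\: inv_set s.
    apply/properP; split.
      by apply/subsetP => p; rewrite is' !in_setD in_setU in_set1 negb_or => /andP[/andP[_ ->] ->].
    by exists (a, b); rewrite ?is' !in_setD ?in_setU ?in_set1 ?eqxx //= abt andbT; apply: ab_notin.
  by move/proper_card; lia.
case: (classic (orient_eq Hg O (OrF s'))) => [eqO'|neqO'].
  exact: (IH s' O).
apply: (PI_step (C := OrF s')).
- split => //; exists a, b; split => // X XH; rewrite eqO //.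
  exact: (swap_flip Hne).
- exact: acyclic_OrF.
- exact: (IH s').
Qed.
End S4.

Section S5.
Variable n : nat.
Notation pos p := ((p^-1)%g : {perm 'I_n}).

Lemma ext (R : rel 'I_n) (p : {perm 'I_n}) x y :
  (forall u v, R u v -> p u < p v) -> ~~ connect R y x ->
  exists q : {perm 'I_n}, (forall u v, R u v -> q u < q v) /\ q x < q y.
Proof.
move=> Hp nyx.
pose key z := (connect R y z) * n + p z.
have keyR : forall u v, R u v -> key u < key v.
  move=> u v uv; have := Hp _ _ uv; have := ltn_ord (p u); rewrite /key.
  case: (boolP (connect R y u)) => cu.
    by rewrite (connect_trans cu (connect1 uv)) /=; lia.
  by case: (connect R y v) => /=; lia.
have keyxy : key x < key y.
  by rewrite /key (negbTE nyx) connect0 /=; have := ltn_ord (p x); lia.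
have keyinj : injective key.
  move=> u v; rewrite /key; have := ltn_ord (p u); have := ltn_ord (p v).
  case: (connect R y u); case: (connect R y v) => /= hu hv E;
    apply: (@perm_inj _ p); apply: ord_inj; lia.
pose q0 z := #|[set w | key w < key z]|.
have q0lt : forall z, q0 z < n.
  move=> z; rewrite /q0.
  have : [set w | key w < key z] \subset [set~ z].
    by apply/subsetP => w; rewrite !inE; apply: contraTneq => ->; rewrite ltnn.
  move/subset_leq_card; rewrite cardsC1 card_ord; have := ltn_ord z; lia.
pose q1 z : 'I_n := Ordinal (q0lt z).
have q0mono : forall u v, key u < key v -> q0 u < q0 v.
  move=> u v h; apply: proper_card; apply/properP; split.
    by apply/subsetP => w; rewrite !inE => h'; lia.
  by exists u; rewrite !inE ?ltnn.
have q1inj : injective q1.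
  move=> u v /(congr1 val) /= E.
  case: (ltngtP (key u) (key v)) => [h|h|h].
  - by have := q0mono _ _ h; lia.
  - by have := q0mono _ _ h; lia.
  - exact: keyinj.
exists (perm q1inj); split.
  by move=> u v uv; rewrite !permE /=; apply: q0mono; apply: keyR.
by rewrite !permE /=; apply: q0mono.
Qed.

Lemma Or_le (pi : {perm 'I_n}) (X : {set 'I_n}) z : Or pi X = Some z ->
  forall y, y \in X -> pos pi z <= pos pi y.
Proof.
move=> E; have zX := Or_mem E.
case: (@arg_minnP _ z (mem X) (fun y => pos pi y) zX) => m mX Hm.
by rewrite (Or_min mX Hm) in E; case: E => <-.
Qed.

Lemma connect_mono (R : rel 'I_n) (f : 'I_n -> nat) :
  (forall x y, R x y -> f x < f y) -> forall u v, connect R u v -> f u <= f v.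
Proof.
move=> Hf u v /connectP [p pth ->]; elim: p u pth => [//|w p IH] u /= /andP[uw pth].
by have := IH _ pth; have := Hf _ _ uw; move=> h1 h2; apply: leq_trans (ltnW h1) h2.
Qed.

Lemma tc_mono (R : rel 'I_n) (f : 'I_n -> nat) :
  (forall x y, R x y -> f x < f y) -> forall u v,
  [exists z, R u z && connect R z v] -> f u < f v.
Proof.
move=> Hf u v /existsP [z /andP[uz zv]].
by have := connect_mono Hf zv; have := Hf _ _ uz; lia.
Qed.

Lemma connect_tc (R : rel 'I_n) u v : connect R u v -> u <> v ->
  [exists z, R u z && connect R z v].
Proof.
move/connectP => [[|w p] /= pth ->] //.
move: pth => /andP[uw pth] _; apply/existsP; exists w; rewrite uw /=.
by apply/connectP; exists p.
Qed.

Section Fib.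
Variable Hg : {set {set 'I_n}}.
Variable O : {set 'I_n} -> 'I_n.
Hypothesis HO : orientation Hg O.

Lemma fiber_good pi : in_fiber Hg pi O ->
  forall x y, prec_step Hg O x y -> pos pi x < pos pi y.
Proof.
move=> Hf x y /existsP [X /andP[XH /andP[/eqP OX]]]; rewrite in_setD1 => /andP[yx yX].
have := Or_le (Hf X XH) yX; rewrite OX leq_eqVlt => /orP[/eqP E|//].
by move/val_inj/perm_inj: E => E; rewrite E eqxx in yx.
Qed.

Lemma good_fiber pi : (forall x y, prec_step Hg O x y -> pos pi x < pos pi y) ->
  in_fiber Hg pi O.
Proof.
move=> Hg' X XH; apply: Or_min; first exact: HO.
move=> y yX; case: (eqVneq y (O X)) => [->//|ny].
apply: ltnW; apply: Hg'; apply/existsP; exists X.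
by rewrite XH eqxx in_setD1 ny yX.
Qed.
End Fib.

Lemma charA Hg A (s : {perm 'I_n}) : orientation Hg A -> fiber_min Hg A s ->
  forall a b : 'I_n, a < b -> ((a, b) \in inv_set s) = prec Hg A b a.
Proof.
move=> HA [fs smin] a b ab; apply/idP/idP.
  move=> Hinv; case: (boolP (prec Hg A b a)) => // np; exfalso.
  have nc : ~~ connect (prec_step Hg A) b a.
    apply/negP => c; move/negP: np; apply; apply: (connect_tc c) => E.
    by move: ab; rewrite E ltnn.
  have [q [qR qab]] := ext (fiber_good fs) nc.
  have fq : in_fiber Hg (q^-1)%g A by apply: good_fiber => //; rewrite invgK.
  have := subsetP (smin _ fq) _ Hinv; rewrite inv_mem invgK; lia.
move=> pba; rewrite inv_mem ab /=.
exact: (tc_mono (fiber_good fs)).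
Qed.

Lemma charB Hg B (t : {perm 'I_n}) : orientation Hg B -> fiber_max Hg B t ->
  forall a b : 'I_n, a < b -> ((a, b) \in inv_set t) = ~~ prec Hg B a b.
Proof.
move=> HB [ft tmax] a b ab; apply/idP/idP.
  rewrite inv_mem ab /= => h; apply/negP => pab.
  by have := tc_mono (fiber_good ft) pab; lia.
move=> np.
have nc : ~~ connect (prec_step Hg B) a b.
  apply/negP => c; apply: (negP np); apply: (connect_tc c) => E.
  by move: ab; rewrite E ltnn.
have [q [qR qab]] := ext (fiber_good ft) nc.
have fq : in_fiber Hg (q^-1)%g B by apply: good_fiber => //; rewrite invgK.
apply: (subsetP (tmax _ fq)); rewrite inv_mem invgK ab /=; lia.
Qed.
End S5.

Section Mono.
Variable n : nat.
Variable Hg : {set {set 'I_n}}.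
Variable O : {set 'I_n} -> 'I_n.
Variable f : 'I_n -> nat.
Hypothesis HO : orientation Hg O.
Hypothesis Hsub : forall X Z, X \in Hg -> Z \in Hg -> Z \subset X -> O X \in Z -> O Z = O X.
Hypothesis Hcap : closed_under_intersection Hg.
Hypothesis Hconv : forall X, X \in Hg -> forall x y z, x \in X -> z \in X ->
  f x <= f y <= f z -> y \in X.
Hypothesis Hf : injective f.

Definition Rf : rel 'I_n := fun x y => prec_step Hg O x y && (f x < f y).

Lemma cross : forall p w u, path Rf w p -> f w < f u <= f (last w p) ->
  exists z z', [/\ Rf z z', f w <= f z, f z < f u, f u <= f z' &
                   connect Rf z' (last w p)].
Proof.
elim=> [|y p IH] w u /=; first by lia.
move=> /andP[wy pth] h.
case: (leqP (f u) (f y)) => hy.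
  exists w, y; split => //; first by lia.
  by apply/connectP; exists p.
have h2 : f y < f u <= f (last y p) by rewrite hy; case/andP: h.
have [z [z' [H1 H2 H3 H4 H5]]] := IH y u pth h2.
exists z, z'; split => //.
by move: wy => /andP[_ ?]; lia.
Qed.

Lemma up : forall p u, path (prec_step Hg O) u p -> f u < f (last u p) ->
  connect Rf u (last u p).
Proof.
elim=> [|w p IH] u /=; first by lia.
move=> /andP[uw pth] h; set v := last w p.
move: (uw) => /existsP [W /andP[WH /andP[/eqP OW]]]; rewrite in_setD1 => /andP[wu wW].
have uW : u \in W by rewrite -OW; apply: HO.
case: (leqP (f v) (f w)) => hv.
  have vW : v \in W by apply: (Hconv WH uW wW); rewrite hv andbT ltnW.
  apply: connect1; rewrite /Rf h andbT; apply/existsP; exists W.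
  rewrite WH OW eqxx in_setD1 vW andbT /=.
  by apply/eqP => E; move: h; rewrite -/v E ltnn.
have cw := IH w pth hv.
case: (ltngtP (f u) (f w)) => [uw'|wu'|E].
- by apply: connect_trans cw; apply: connect1; rewrite /Rf uw uw'.
- move/connectP: (cw) => [q qpth Eq].
  have h2 : f w < f u <= f (last w q) by rewrite wu' /=; move: (ltnW h); congr (_ <= f _).
  have [z [z' [Rzz' fwz fzu fuz' cz'v]]] := @cross q w u qpth h2.
  case: (eqVneq z' u) => [Ez'|nz'u]; first by rewrite -Ez' /v Eq.
  have fuz'' : f u < f z'.
    rewrite ltn_neqAle fuz' andbT; apply/eqP => E; apply: (negP nz'u); apply/eqP; by apply: Hf; rewrite E.
  move: Rzz' => /andP[/existsP [Z /andP[ZH /andP[/eqP OZ]]]]; rewrite in_setD1 => /andP[_ z'Z] _.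
  have zZ : z \in Z by rewrite -OZ; apply: HO.
  have uZ : u \in Z by apply: (Hconv ZH zZ z'Z); rewrite fuz' ltnW.
  have zW : z \in W by apply: (Hconv WH wW uW); rewrite fwz ltnW.
  have WZH : W :&: Z \in Hg.
    by apply: Hcap => //; apply/set0Pn; exists u; rewrite inE uW uZ.
  have E1 : O (W :&: Z) = O W by apply: Hsub => //; [exact: subsetIl | rewrite OW inE uW uZ].
  have E2 : O (W :&: Z) = O Z by apply: Hsub => //; [exact: subsetIr | rewrite OZ inE zW zZ].
  by move: fzu; rewrite -OW -OZ -E1 -E2 ltnn.
- by move: wu; rewrite (Hf E) eqxx.
Qed.
End Mono.

Lemma last_step (T : finType) (e : rel T) u v : connect e u v -> u != v ->
  exists2 x, connect e u x & e x v.
Proof.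
move/connectP => [p pth ->]; case/lastP: p pth => [|p x] /=; first by rewrite eqxx.
rewrite rcons_path last_rcons => /andP[pth ex] _; exists (last u p) => //.
by apply/connectP; exists p.
Qed.

Section G.
Variable n : nat.

Lemma sub_lemma (Hg : {set {set 'I_n}}) O : orientation Hg O -> acyclic Hg O ->
  forall X Z, X \in Hg -> Z \in Hg -> Z \subset X -> O X \in Z -> O Z = O X.
Proof.
move=> HO Hac X Z XH ZH sub xZ; apply/eqP; apply/negPn/negP => ne.
have := Hac [:: X; Z]; rewrite /= XH ZH => /(_ isT isT); apply/negP.
rewrite /path.cycle /= /cyc_rel !in_setD1 ne xZ (subsetP sub _ (HO Z ZH)) /=.
by rewrite eq_sym ne.
Qed.

Lemma conv1 (X : {set 'I_n}) : is_interval X ->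
  forall x y z : 'I_n, x \in X -> z \in X -> x <= y <= z -> y \in X.
Proof.
move=> /andP[_ /forallP H] x y z xX zX /andP[xy yz].
by move: (H x) => /forallP/(_ y)/forallP/(_ z)/implyP; apply; rewrite xX zX xy yz.
Qed.

Lemma conv2 (X : {set 'I_n}) : is_interval X ->
  forall x y z : 'I_n, x \in X -> z \in X -> n - x <= n - y <= n - z -> y \in X.
Proof.
move=> HX x y z xX zX h; apply: (conv1 HX zX xX).
by have := ltn_ord x; have := ltn_ord y; have := ltn_ord z; lia.
Qed.

Lemma b_to_d (Hg : {set {set 'I_n}}) A B :
  interval_hypergraph Hg -> closed_under_intersection Hg ->
  orientation Hg A -> acyclic Hg A -> orientation Hg B -> acyclic Hg B ->
  (forall I, I \in Hg -> A I <= B I) ->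
  forall i j : 'I_n, i < j -> prec Hg A j i -> ~~ prec Hg B i j.
Proof.
move=> [Hint _] Hcap HA acA HB acB Hle i j ij pA; apply/negP => pB.
have HsubA := sub_lemma HA acA; have HsubB := sub_lemma HB acB.
pose f2 (x : 'I_n) := n - x.
have f2inj : injective f2.
  by move=> x y; rewrite /f2 => E; apply: ord_inj; have := ltn_ord x; have := ltn_ord y; lia.
have cv2 : forall X, X \in Hg -> forall x y z, x \in X -> z \in X ->
    f2 x <= f2 y <= f2 z -> y \in X.
  by move=> X XH; apply: conv2; apply: Hint.
have cv1 : forall X, X \in Hg -> forall x y z : 'I_n, x \in X -> z \in X ->
    (val x) <= (val y) <= (val z) -> y \in X.
  by move=> X XH; apply: conv1; apply: Hint.
move: pA => /existsP [z /andP[jz /connectP [p pth Ei]]].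
have c2 : connect (Rf Hg A f2) j i.
  have := @up _ Hg A f2 HA HsubA Hcap cv2 f2inj (z :: p) j.
  rewrite /= jz pth -Ei; apply => //.
  by rewrite /f2; have := ltn_ord j; lia.
have ji : j != i by apply/eqP => E; move: ij; rewrite E ltnn.
have [x cjx Rx] := last_step c2 ji.
have xj : x <= j.
  have := connect_mono (f := f2) (R := Rf Hg A f2) _ cjx.
  rewrite /f2; have := ltn_ord x; have := ltn_ord j.
  by move=> h1 h2 h3; have := h3 (fun a b => fun h => proj2 (andP h)); lia.
move: Rx => /andP[/existsP [X /andP[XH /andP[/eqP AX]]]]; rewrite in_setD1 => /andP[_ iX] hx.
have ix : i < x by move: hx; rewrite /f2; have := ltn_ord x; have := ltn_ord i; lia.
move: pB => /existsP [z' /andP[iz' /connectP [p' pth' Ej]]].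
have c1 : connect (Rf Hg B val) i j.
  have := @up _ Hg B val HB HsubB Hcap cv1 val_inj (z' :: p') i.
  by rewrite /= iz' pth' -Ej; apply.
move/connectP: c1 => [q qpth Ej'].
have h2 : val i < val x <= val (last i q) by rewrite -Ej' ix xj.
have [y [y' [Ryy' iy yx xy' _]]] := cross qpth h2.
move: Ryy' => /andP[/existsP [Y /andP[YH /andP[/eqP BY]]]]; rewrite in_setD1 => /andP[_ y'Y] _.
have yY : y \in Y by rewrite -BY; apply: HB.
have xY : x \in Y by apply: (cv1 _ YH y x y') => //; rewrite xy' andbT ltnW.
have xX : x \in X by rewrite -AX; apply: HA.
have yX : y \in X by apply: (cv1 _ XH i y x) => //; rewrite iy ltnW.
have ZH : X :&: Y \in Hg.
  by apply: Hcap => //; apply/set0Pn; exists x; rewrite inE xX xY.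
have AZ : A (X :&: Y) = A X by apply: HsubA => //; [exact: subsetIl | rewrite AX inE xX xY].
have BZ : B (X :&: Y) = B Y by apply: HsubB => //; [exact: subsetIr | rewrite BY inE yX yY].
have := Hle _ ZH; rewrite AZ BZ AX BY => h.
by have := leq_ltn_trans h yx; rewrite ltnn.
Qed. End G.

Lemma a_to_b n (Hg : {set {set 'I_n}}) O O' : PI_le Hg O O' ->
  forall I, I \in Hg -> O I <= O' I.
Proof.
elim=> [O1 O2 E|O1 C O2 [_ [i [j [ij Hf]]]] _ _ IH] I XH; first by rewrite E.
have [h1 _] := Hf I XH; have := IH I XH.
case: (eqVneq (O1 I) (C I)) => [->//|/eqP ne].
by have [-> ->] := h1 ne => h; apply: leq_trans h; apply: ltnW.
Qed.

Theorem theorem4p9 (n : nat) (Hg : {set {set 'I_n}})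
  (A B : {set 'I_n} -> 'I_n) (sigmaA tauB : {perm 'I_n}) :
  interval_hypergraph Hg -> closed_under_intersection Hg ->
  orientation Hg A -> acyclic Hg A ->
  orientation Hg B -> acyclic Hg B ->
  fiber_min Hg A sigmaA -> fiber_max Hg B tauB ->
  [<-> PI_le Hg A B;
       forall I, I \in Hg -> (A I <= B I)%N;
       weak_le sigmaA tauB;
       forall i j : 'I_n, (i < j)%N -> prec Hg A j i -> ~~ prec Hg B i j].
Proof.
move=> Hih Hcap HA acA HB acB Hfs Hft.
have Hne : forall X, X \in Hg -> X != set0 by move=> X /(proj1 Hih) /andP[].
pose d := A set0.
have eqA : orient_eq Hg A (OrF d sigmaA) by move=> X XH; rewrite /OrF (proj1 Hfs X XH).
have eqB : orient_eq Hg (OrF d tauB) B by move=> X XH; rewrite /OrF (proj1 Hft X XH).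
have dc : (forall i j : 'I_n, (i < j)%N -> prec Hg A j i -> ~~ prec Hg B i j) ->
    weak_le sigmaA tauB.
  move=> Hd; apply/subsetP => -[a b] H.
  have ab : a < b by move: H; rewrite inv_mem => /andP[].
  move: H; rewrite (charA HA Hfs ab) (charB HB Hft ab); exact: Hd.
tfae=> [Ha|Hb|Hc|Hd].
- exact: a_to_b Ha.
- by apply: dc; apply: b_to_d.
- move=> i j ij pA.
  have : (i, j) \in inv_set sigmaA by rewrite (charA HA Hfs ij).
  by move/(subsetP Hc); rewrite (charB HB Hft ij).
- exact: (chain Hne eqB (leqnn _) (dc Hd) eqA).
Qed.
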